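(* Let $f:\mathbb{R}^n\times\mathbb{R}^m\to\mathbb{R}^n$ be smooth with $f(0,0)=0$, and suppose $f$ is affine in the input, i.e. $f(x,u)=f_0(x)+g(x)u$ for smooth $f_0:\mathbb{R}^n\to\mathbb{R}^n$ and $g:\mathbb{R}^n\to\mathbb{R}^{n\times m}$. Let $X\subset\mathbb{R}^n$, $U\subset\mathbb{R}^m$, $P\subset\mathbb{R}^n$ be bounded open sets containing the origin, with $U$ convex, and suppose there is $\bar h>0$ such that for every $x_0\in X$ and $u_0\in U$ the initial-value problem $\dot x(t)=f(x(t),u_0)$, $x(0)=x_0$, has a unique solution $\phi(t;x_0,u_0)$ on $0\le t\le \bar h$. Let $Q\in\mathbb{R}^{n\times n}$ be positive semidefinite and $R\in\mathbb{R}^{m\times m}$ positive definite. For a sampling period $h\in(0,\bar h]$ define the Hamiltonian $$H(x,u,p^+)=\phi(h;x,u)^{\mathrm T}p^+ + h\,x^{\mathrm T}Qx + h\,u^{\mathrm T}Ru .$$ Then for all sufficiently small $h>0$, the function $u\mapsto H(x,u,p^+)$ is convex on $U$ for every $(x,p^+)\in X\times P$.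
   Context: $\phi(t;x_0,u_0)$ denotes the state at time $t$ of the plant $\dot x=f(x,u)$ started at $x_0$ with the input held constant at $u_0$ (it is smooth in $(t,x_0,u_0)$). This Hamiltonian arises from the sampled-data optimal control problem of minimizing $\sum_{k\ge0}(h x[k]^{\mathrm T}Qx[k]+h u[k]^{\mathrm T}Ru[k])$ subject to $x[k+1]=\phi(h;x[k],u[k])$. *)

(* Defs.v *)
From HB Require Import structures.
From mathcomp Require Import all_boot all_order all_algebra.
From mathcomp Require Import all_classical all_reals all_analysis.
Set Implicit Arguments. Unset Strict Implicit. Unset Printing Implicit Defensive.
Import Order.TTheory GRing.Theory Num.Theory.
Import numFieldNormedType.Exports.
Local Open Scope classical_set_scope.
Local Open Scope ring_scope.

Fixpoint iter_dirder (R : realType) (V W : normedModType R)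
    (vs : seq V) (F : V -> W) : V -> W :=
  match vs with
  | [::] => F
  | v :: vs' => fun x => 'D_v (iter_dirder vs' F) x
  end.

(* F is smooth (C^infinity) on the whole space: every iterated directional
   derivative exists everywhere and is continuous.  (In finite dimension this
   is equivalent to being C^infinity.) *)
Definition smooth (R : realType) (V W : normedModType R) (F : V -> W) : Prop :=
  forall vs : seq V,
    (forall v x, derivable (iter_dirder vs F) x v) /\
    continuous (iter_dirder vs F).

Definition qform (R : realType) (k : nat) (A : 'M[R]_k) (x : 'cV[R]_k) : R :=
  (x^T *m A *m x) 0 0.

Definition dotcv (R : realType) (k : nat) (a b : 'cV[R]_k) : R :=
  (a^T *m b) 0 0.

Definition psd (R : realType) (k : nat) (A : 'M[R]_k) : Prop :=
  A^T = A /\ forall x : 'cV[R]_k, 0 <= qform A x.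

Definition pd (R : realType) (k : nat) (A : 'M[R]_k) : Prop :=
  A^T = A /\ forall x : 'cV[R]_k, x != 0 -> 0 < qform A x.

Definition convex_set_in (R : realType) (V : lmodType R) (A : set V) : Prop :=
  forall x y (l : R), A x -> A y -> 0 <= l <= 1 -> A (l *: x + (1 - l) *: y).

Definition convex_fun_on (R : realType) (V : lmodType R) (A : set V)
    (F : V -> R) : Prop :=
  forall x y (l : R), A x -> A y -> 0 <= l <= 1 ->
    F (l *: x + (1 - l) *: y) <= l * F x + (1 - l) * F y.

Definition ode_solution (R : realType) (n : nat)
    (F : 'cV[R]_n -> 'cV[R]_n) (x0 : 'cV[R]_n) (T : R) (y : R -> 'cV[R]_n) : Prop :=
  y 0 = x0 /\
  {within `[0, T], continuous y} /\
  (forall t, 0 < t < T -> is_derive t 1 y (F (y t))).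

Definition hamiltonian (R : realType) (n m : nat)
    (phi : R -> 'cV[R]_n -> 'cV[R]_m -> 'cV[R]_n)
    (Q : 'M[R]_n) (Rw : 'M[R]_m) (h : R)
    (x : 'cV[R]_n) (u : 'cV[R]_m) (p : 'cV[R]_n) : R :=
  dotcv (phi h x u) p + h * qform Q x + h * qform Rw u.

(* Main.v *)
Require Import Defs.
From HB Require Import structures.
From mathcomp Require Import all_boot all_order all_algebra.
From mathcomp Require Import all_classical all_reals all_analysis.
From mathcomp Require Import ring lra.
Import Order.TTheory GRing.Theory Num.Theory.
Import numFieldNormedType.Exports.
Local Open Scope classical_set_scope.
Local Open Scope ring_scope.
Set Implicit Arguments. Unset Strict Implicit. Unset Printing Implicit Defensive.
Section S.
Variable R : realType.
Lemma mxn_entry p q (M : 'M[R]_(p,q)) i j : `|M i j| <= `|M|.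
Proof.
rewrite [leRHS]/Num.Def.normr /= mx_normrE.
by apply: le_trans (le_bigmax _ _ (i, j)).
Qed.
Lemma mxn_le p q (M : 'M[R]_(p,q)) c : 0 <= c -> (forall i j, `|M i j| <= c) -> `|M| <= c.
Proof.
move=> c0 H; rewrite [leLHS]/Num.Def.normr /= mx_normrE.
by apply: bigmax_le => // -[i j] _; apply: H.
Qed.
Lemma DL n (W : normedModType R) (F : 'cV[R]_n -> W) q d s0 :
  derivable F (q + s0 *: d) d ->
  is_derive s0 1 (fun s : R => F (q + s *: d)) ('D_d F (q + s0 *: d)).
Proof.
have E : (fun h : R => h^-1 *: (((fun s : R => F (q + s *: d)) \o shift s0) (h *: 1) - F (q + s0 *: d)))
  = (fun h : R => h^-1 *: ((F \o shift (q + s0 *: d)) (h *: d) - F (q + s0 *: d))).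
  apply/funext => h /=; congr (_ *: (F _ - _)).
  by rewrite [h *: 1]mulr1 scalerDl addrCA addrC.
move=> Hd; split; first by rewrite /derivable /= E.
by rewrite /derive /= E.
Qed.

Lemma DC (V : normedModType R) p q (M : V -> 'M[R]_(p,q)) t v d i j :
  is_derive t v M d -> is_derive t v (fun x => M x i j) (d i j).
Proof.
move=> [Hd Hv]; split; first by move/derivable_mxP: Hd; apply.
by rewrite -Hv derive_mx // mxE.
Qed.
Lemma CP1 n p q (F : 'cV[R]_n -> 'M[R]_(p,q)) q0 dl d i j :
  (forall s : R, derivable F (q0 + s *: dl) dl) ->
  exists2 th : R, 0 <= th <= 1 &
    (F (q0 + d *: dl) - F q0) i j = d * ('D_dl F (q0 + (th * d) *: dl)) i j.
Proof.
move=> Hder.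
pose psi := fun s : R => (F (q0 + s *: dl) i j : R).
pose dpsi := fun s : R => (('D_dl F (q0 + s *: dl)) i j : R).
have Hpsi (s : R) : is_derive s (1:R) psi (dpsi s) by apply: DC; apply: DL.
have Hc a b : {within `[a, b], continuous psi}.
  apply: derivable_within_continuous => s _; exact: (Hpsi s).(ex_derive).
have E0 : F q0 i j = psi 0 by rewrite /psi scale0r addr0.
rewrite mxE mxE E0 -/(psi d).
case: (ltgtP d 0) => [dlt|dgt|->].
- have [c /andP[] + + E] := MVT_segment (ltW dlt) (fun x _ => Hpsi x) (Hc _ _).
  rewrite !bnd_simp => cd c0.
  exists (c / d).
    by rewrite mulr_le0 ?invr_le0 ?(ltW dlt) //= ler_ndivrMr // mul1r.
  rewrite divfK ?lt_eqF //.
  have -> : psi d - psi 0 = - (psi 0 - psi d) by rewrite opprB.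
  by rewrite E sub0r mulrN mulrC opprK.
- have [c /andP[] + + E] := MVT_segment (ltW dgt) (fun x _ => Hpsi x) (Hc _ _).
  rewrite !bnd_simp => c0 cd.
  exists (c / d).
    by rewrite divr_ge0 ?(ltW dgt) //= ler_pdivrMr // mul1r.
  by rewrite divfK ?gt_eqF // E subr0 mulrC.
- by exists 0; rewrite ?lexx ?ler01 // subrr mul0r.
Qed.
Definition pth n (e a : 'cV[R]_n) (t : nat) : 'cV[R]_n :=
  \col_l (if (l < t)%N then a l 0 else e l 0).

Definition betw n (e a q : 'cV[R]_n) :=
  forall l, exists2 w : R, 0 <= w <= 1 & q l 0 = e l 0 + w * (a l 0 - e l 0).

Lemma pth0 n (e a : 'cV[R]_n) : pth e a 0 = e.
Proof. by apply/matrixP => l z; rewrite mxE ord1. Qed.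

Lemma pthn n (e a : 'cV[R]_n) : pth e a n = a.
Proof. by apply/matrixP => l z; rewrite mxE ord1 ltn_ord. Qed.

Lemma pthS n (e a : 'cV[R]_n) (k : 'I_n) :
  pth e a k.+1 = pth e a k + (a k 0 - e k 0) *: delta_mx k 0.
Proof.
apply/matrixP => l z; rewrite !mxE ord1 eqxx andbT.
case: (ltngtP l k) => [lk|kl|/val_inj lk].
- have nlk : (l == k) = false by apply/eqP => E; move: lk; rewrite E ltnn.
  by rewrite ltnS (ltnW lk) nlk mulr0 addr0.
- have nlk : (l == k) = false by apply/eqP => E; move: kl; rewrite E ltnn.
  by rewrite ltnS (leqNgt l k) kl /= nlk mulr0 addr0.
- by rewrite lk ltnSn eqxx mulr1 addrC subrK.
Qed.

Lemma pth_betw n (e a : 'cV[R]_n) (k : 'I_n) th : 0 <= th <= 1 ->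
  betw e a (pth e a k + (th * (a k 0 - e k 0)) *: delta_mx k 0).
Proof.
move=> hth l; rewrite !mxE eqxx andbT.
case: (ltngtP l k) => [lk|kl|/val_inj lk].
- have nlk : (l == k) = false by apply/eqP => E; move: lk; rewrite E ltnn.
  by exists 1; rewrite ?lexx ?ler01 // ?lk ?nlk mulr0 addr0 mul1r addrC subrK.
- have nlk : (l == k) = false by apply/eqP => E; move: kl; rewrite E ltnn.
  by exists 0; rewrite ?lexx ?ler01 // nlk mulr0 mul0r.
- by exists th; rewrite // lk eqxx mulr1.
Qed.

Lemma betw_box n (e a q : 'cV[R]_n) rho : `|e| <= rho -> `|a| <= rho -> betw e a q -> `|q| <= rho.
Proof.
move=> he ha hq; apply: mxn_le; first exact: le_trans (normr_ge0 _) he.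
move=> l z; rewrite ord1; have [w /andP[w0 w1] ->] := hq l.
have -> : e l 0 + w * (a l 0 - e l 0) = (1 - w) * e l 0 + w * a l 0 by ring.
apply: le_trans (ler_normD _ _) _; rewrite !normrM (ger0_norm w0) ger0_norm ?subr_ge0 //.
have h1 := le_trans (mxn_entry e l 0) he; have h2 := le_trans (mxn_entry a l 0) ha.
have -> : rho = (1 - w) * rho + w * rho by ring.
by apply: lerD; apply: ler_wpM2l => //; rewrite subr_ge0.
Qed.

Lemma TEL (Phi : nat -> R) (beta : nat -> R) N : Phi 0%N = 0 ->
  (forall k, (k < N)%N -> `|Phi k.+1 - Phi k| <= beta k) -> `|Phi N| <= \sum_(k < N) beta k.
Proof.
move=> P0 H.
have -> : Phi N = \sum_(k < N) (Phi k.+1 - Phi k).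
  by rewrite -(big_mkord xpredT (fun k => Phi k.+1 - Phi k)) telescope_sumr // P0 subr0.
apply: le_trans (ler_norm_sum _ _ _) _; apply: ler_sum => k _; exact: H.
Qed.
Lemma STEP n p q (F : 'cV[R]_n -> 'M[R]_(p,q)) (e a : 'cV[R]_n) (k : 'I_n) i j :
  (forall y, derivable F y (delta_mx k 0)) ->
  exists2 y, betw e a y &
    (F (pth e a k.+1) - F (pth e a k)) i j = (a k 0 - e k 0) * ('D_(delta_mx k 0) F y) i j.
Proof.
move=> Hd; rewrite pthS.
have [th hth E] := @CP1 n p q F (pth e a k) (delta_mx k 0) (a k 0 - e k 0) i j (fun s => Hd _).
by exists (pth e a k + (th * (a k 0 - e k 0)) *: delta_mx k 0) => //; exact: pth_betw.
Qed.

Lemma LIP n p q (F : 'cV[R]_n -> 'M[R]_(p,q)) rho C (a e : 'cV[R]_n) : 0 <= C ->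
  (forall y (k : 'I_n), derivable F y (delta_mx k 0)) ->
  (forall y (k : 'I_n), `|y| <= rho -> `|'D_(delta_mx k 0) F y| <= C) ->
  `|a| <= rho -> `|e| <= rho -> `|F a - F e| <= n%:R * C * `|a - e|.
Proof.
move=> C0 Hd HC ha he; apply: mxn_le; first by rewrite mulr_ge0 ?mulr_ge0.
move=> i j.
have := @TEL (fun t => (F (pth e a t) - F e) i j) (fun _ => C * `|a - e|) n.
have -> : n%:R * C * `|a - e| = (C * `|a - e|) *+ n.
  by rewrite -[in RHS]mulr_natl; symmetry; apply: mulrA.
rewrite pth0 pthn sumr_const card_ord; apply.
  by rewrite subrr mxE.
move=> k kn; pose k' := Ordinal kn.
have -> : (F (pth e a k.+1) - F e) i j - (F (pth e a k) - F e) i j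
        = (F (pth e a k'.+1) - F (pth e a k')) i j by rewrite !mxE /=; ring.
have [y hy ->] := STEP e a i j (Hd ^~ k').
rewrite normrM mulrC; apply: ler_pM => //.
  by apply: le_trans (HC y k' (betw_box he ha hy)); exact: mxn_entry.
have -> : a k' 0 - e k' 0 = (a - e) k' 0 by rewrite !mxE.
exact: mxn_entry.
Qed.
Lemma convex_box n (a b : 'cV[R]_n) rho (l : R) : 0 <= l <= 1 ->
  `|a| <= rho -> `|b| <= rho -> `|l *: a + (1 - l) *: b| <= rho.
Proof.
move=> /andP[l0 l1] ha hb; apply: le_trans (ler_normD _ _) _.
have l1p : 0 <= 1 - l by rewrite subr_ge0.
rewrite !normrZ (ger0_norm l0) (ger0_norm l1p).
have -> : rho = l * rho + (1 - l) * rho by ring.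
by apply: lerD; apply: ler_wpM2l => //; rewrite subr_ge0.
Qed.

Lemma DEF n p q (F : 'cV[R]_n -> 'M[R]_(p,q)) rho C2 (a b : 'cV[R]_n) (l : R) :
  0 <= C2 ->
  (forall y (k : 'I_n), derivable F y (delta_mx k 0)) ->
  (forall y (k k2 : 'I_n), derivable ('D_(delta_mx k 0) F) y (delta_mx k2 0)) ->
  (forall y (k k2 : 'I_n), `|y| <= rho ->
      `|'D_(delta_mx k2 0) ('D_(delta_mx k 0) F) y| <= C2) ->
  `|a| <= rho -> `|b| <= rho -> 0 <= l <= 1 ->
  `|l *: F a + (1 - l) *: F b - F (l *: a + (1 - l) *: b)|
     <= n%:R ^+ 2 * C2 * (l * (1 - l)) * `|a - b| ^+ 2.
Proof.
move=> C0 Hd Hd2 HC ha hb hl.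
have /andP[l0 l1] := hl.
have l1' : 0 <= 1 - l by rewrite subr_ge0.
set e := l *: a + (1 - l) *: b.
have he : `|e| <= rho by apply: convex_box.
apply: mxn_le; first by rewrite !mulr_ge0 ?exprn_ge0.
move=> i j.
pose Phi := fun t => l * (F (pth e a t) - F e) i j + (1 - l) * (F (pth e b t) - F e) i j.
have := @TEL Phi (fun _ => l * (1 - l) * `|a - b| * (n%:R * C2 * `|a - b|)) n.
have -> : n%:R ^+ 2 * C2 * (l * (1 - l)) * `|a - b| ^+ 2 =
   (l * (1 - l) * `|a - b| * (n%:R * C2 * `|a - b|)) *+ n.
  by rewrite -[in RHS]mulr_natl; ring.
rewrite sumr_const card_ord /Phi !pth0 !pthn => H.
have -> : (l *: F a + (1 - l) *: F b - F e) i j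
   = l * (F a - F e) i j + (1 - l) * (F b - F e) i j by rewrite !mxE; ring.
apply: H; first by rewrite subrr mxE; ring.
move=> k kn; pose k' := Ordinal kn.
have -> : l * (F (pth e a k.+1) - F e) i j + (1 - l) * (F (pth e b k.+1) - F e) i j -
    (l * (F (pth e a k) - F e) i j + (1 - l) * (F (pth e b k) - F e) i j)
  = l * (F (pth e a k'.+1) - F (pth e a k')) i j
    + (1 - l) * (F (pth e b k'.+1) - F (pth e b k')) i j by rewrite !mxE /=; ring.
have [xi hxi ->] := STEP e a i j (Hd ^~ k').
have [eta heta ->] := STEP e b i j (Hd ^~ k').
have Ea : a k' 0 - e k' 0 = (1 - l) * (a - b) k' 0 by rewrite /e !mxE; ring.
have Eb : b k' 0 - e k' 0 = - l * (a - b) k' 0 by rewrite /e !mxE; ring.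
rewrite Ea Eb.
have -> : l * ((1 - l) * (a - b) k' 0 * ('D_(delta_mx k' 0) F xi) i j) +
   (1 - l) * (- l * (a - b) k' 0 * ('D_(delta_mx k' 0) F eta) i j)
   = l * (1 - l) * (a - b) k' 0 * ('D_(delta_mx k' 0) F xi - 'D_(delta_mx k' 0) F eta) i j
  by rewrite !mxE; ring.
rewrite normrM normrM (ger0_norm (mulr_ge0 l0 l1')).
apply: ler_pM; rewrite ?normr_ge0 ?mulr_ge0 //.
  by apply: ler_wpM2l; rewrite ?mulr_ge0 //; exact: mxn_entry.
apply: le_trans (mxn_entry _ i j) _.
have hxib : `|xi| <= rho := betw_box he ha hxi.
have hetab : `|eta| <= rho := betw_box he hb heta.
apply: le_trans (LIP (F := 'D_(delta_mx k' 0) F) C0 (Hd2 ^~ k') (fun y k2 hy => HC y k' k2 hy) hxib hetab) _.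
apply: ler_wpM2l; first by rewrite mulr_ge0.
apply: mxn_le => // l2 z; rewrite ord1 !mxE.
have [w /andP[w0 w1] ->] := hxi l2.
have [w' /andP[w0' w1'] ->] := heta l2.
have -> : e l2 0 + w * (a l2 0 - e l2 0) - (e l2 0 + w' * (b l2 0 - e l2 0))
  = (w * (1 - l) + w' * l) * (a - b) l2 0 by rewrite /e !mxE; ring.
rewrite normrM; apply: le_trans (mxn_entry (a - b) l2 0).
rewrite ger0_norm ?addr_ge0 ?mulr_ge0 //.
apply: ler_piMl => //.
apply: (@le_trans _ _ (1 * (1 - l) + 1 * l)); last by rewrite !mul1r subrK.
by apply: lerD; apply: ler_wpM2r.
Qed.
Lemma within_coord p q (y : R -> 'M[R]_(p,q)) (A : set R) i j :
  {within A, continuous y} -> {within A, continuous (fun t => y t i j)}.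
Proof.
move=> yc x.
apply: (@continuous_comp (subspace A) _ _ y (fun M : 'M[R]_(p,q) => M i j) x (yc x)).
exact: coord_continuous.
Qed.

Lemma MVI p q (y dy : R -> 'M[R]_(p,q)) a b K : a <= b -> 0 <= K ->
  {within `[a, b], continuous y} ->
  (forall t, a < t < b -> is_derive t 1 y (dy t)) ->
  (forall t, a < t < b -> `|dy t| <= K) ->
  `|y b - y a| <= K * (b - a).
Proof.
move=> ab K0 yc yd ydK; apply: mxn_le; first by rewrite mulr_ge0 // subr_ge0.
move=> i j.
case: (eqVneq a b) => [->|nab]; first by rewrite !subrr mxE normr0 mulr0.
have ab' : a < b by rewrite lt_neqAle nab.
have hd : forall x, x \in `]a, b[ -> is_derive x 1 (fun t => y t i j) (dy x i j).
  by move=> x; rewrite in_itv /= => hx; exact: DC (yd x hx).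
have [c hc E] := @MVT R (fun t => y t i j) (fun t => dy t i j) a b ab' hd (@within_coord p q y _ i j yc).
move: hc; rewrite in_itv /= => hc.
rewrite !mxE E normrM [`|b - a|]ger0_norm ?subr_ge0 //.
apply: ler_wpM2r; first by rewrite subr_ge0.
by apply: le_trans (ydK c hc); exact: mxn_entry.
Qed.
Lemma within_norm p q (y : R -> 'M[R]_(p,q)) (A : set R) :
  {within A, continuous y} -> {within A, continuous (fun t => `|y t|)}.
Proof.
move=> yc x.
apply: (@continuous_comp (subspace A) _ _ y (fun M : 'M[R]_(p,q) => `|M|) x (yc x)).
exact: norm_continuous.
Qed.

Lemma GR p q (y dy : R -> 'M[R]_(p,q)) T L B : 0 <= L -> L * T <= 2^-1 -> 0 <= B ->
  y 0 = 0 -> {within `[0, T], continuous y} ->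
  (forall t, 0 < t < T -> is_derive t 1 y (dy t)) ->
  (forall t, 0 < t < T -> `|dy t| <= L * `|y t| + B) ->
  forall t, 0 <= t <= T -> `|y t| <= 2 * B * t.
Proof.
move=> L0 LT B0 y0 yc yd ydB t /andP[t0 tT].
have ycs : {within `[0, t], continuous y}.
  apply: continuous_subspaceW yc => s /=; rewrite !in_itv /= => /andP[-> st].
  exact: le_trans st tT.
have [c hc cmax] := EVT_max t0 (within_norm ycs).
move: (hc); rewrite in_itv /= => /andP[c0 ct].
set M := `|y c|.
have HM : M <= (L * M + B) * c.
  have K0 : 0 <= L * M + B by apply: addr_ge0 => //; apply: mulr_ge0 => //; exact: normr_ge0.
  have ycc : {within `[0, c], continuous y}.
    apply: continuous_subspaceW ycs => s /=; rewrite !in_itv /= => /andP[-> sc].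
    exact: le_trans sc ct.
  have hd : forall s, 0 < s < c -> is_derive s 1 y (dy s).
    move=> s /andP[s0 sc]; apply: yd; rewrite s0 /=; exact: lt_le_trans sc (le_trans ct tT).
  have hb : forall s, 0 < s < c -> `|dy s| <= L * M + B.
    move=> s /andP[s0 sc]; apply: le_trans (ydB s _) _.
      by rewrite s0 /=; exact: lt_le_trans sc (le_trans ct tT).
    rewrite lerD2r; apply: ler_wpM2l => //; apply: cmax.
    by rewrite in_itv /= (ltW s0) /= (ltW (lt_le_trans sc ct)).
  have := MVI c0 K0 ycc hd hb.
  by rewrite y0 !subr0.
have HM2 : M <= 2 * B * t.
  have h1 : (L * M + B) * c <= (L * M + B) * t.
    by apply: ler_wpM2l => //; apply: addr_ge0 => //; apply: mulr_ge0 => //; exact: normr_ge0.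
  have h2 : L * M * t <= 2^-1 * M.
    rewrite mulrAC; apply: ler_wpM2r; first exact: normr_ge0.
    by apply: le_trans _ LT; apply: ler_wpM2l.
  have := le_trans HM h1; rewrite mulrDl => h3.
  have h4 : M <= 2^-1 * M + B * t by apply: le_trans h3 _; rewrite lerD2r.
  lra.
apply: le_trans HM2; apply: cmax; by rewrite in_itv /= t0 lexx.
Qed.
Lemma within_eps p q (y : R -> 'M[R]_(p,q)) a b s0 e : {within `[a, b], continuous y} ->
  a <= s0 <= b -> 0 < e ->
  exists2 d, 0 < d & forall s, a <= s <= b -> `|s0 - s| < d -> `|y s0 - y s| < e.
Proof.
move=> yc hs0 e0.
have := (@subspace_continuousP _ `[a, b] _ y).1 yc s0.
rewrite /= in_itv /= hs0 => /(_ isT) /cvgrPdist_lt /(_ e e0).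
move=> /nbhs_ballP [d d0 Hd]; exists d => // s hs sd.
apply: (Hd s); last by rewrite /= in_itv /= hs.
by rewrite /ball /=.
Qed.
Lemma APR n (F : 'cV[R]_n -> 'cV[R]_n) (y : R -> 'cV[R]_n) x0 T M rho :
  0 <= M -> M * T <= 2^-1 -> `|x0| <= rho ->
  (forall z, `|z| <= rho + 1 -> `|F z| <= M) ->
  y 0 = x0 -> {within `[0, T], continuous y} ->
  (forall t, 0 < t < T -> is_derive t 1 y (F (y t))) ->
  forall t, 0 <= t <= T -> `|y t - x0| <= 2^-1.
Proof.
move=> M0 MT hx0 HF y0 yc yd.
have box s : `|y s - x0| < 1 -> `|y s| <= rho + 1.
  move=> h; have -> : y s = (y s - x0) + x0 by rewrite subrK.
  apply: le_trans (ler_normD _ _) _; rewrite addrC; apply: lerD => //; exact: ltW.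
have MV s : 0 <= s <= T -> (forall tau, 0 < tau < s -> `|y tau - x0| < 1) ->
    `|y s - x0| <= 2^-1.
  move=> /andP[s0 sT] hb.
  have ycs : {within `[0, s], continuous y}.
    apply: continuous_subspaceW yc => z /=; rewrite !in_itv /= => /andP[-> zs].
    exact: le_trans zs sT.
  have hd : forall tau, 0 < tau < s -> is_derive tau 1 y (F (y tau)).
    move=> tau /andP[t0 ts]; apply: yd; rewrite t0 /=; exact: lt_le_trans ts sT.
  have hB : forall tau, 0 < tau < s -> `|F (y tau)| <= M.
    by move=> tau htau; apply: HF; apply: box; apply: hb.
  have := MVI s0 M0 ycs hd hB; rewrite y0 subr0 => h.
  apply: le_trans h _; apply: le_trans MT; exact: ler_wpM2l.
have claim : forall s, 0 <= s <= T -> `|y s - x0| < 1.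
  move=> s hs; rewrite ltNge; apply/negP => H1.
  pose A := [set z | (0 <= z <= T) /\ 1 <= `|y z - x0|].
  have As : A s by split.
  have hlb : has_lbound A by exists 0 => z [/andP[]].
  have hinf : has_inf A by split => //; exists s.
  set s0 := inf A.
  have s0s : s0 <= s by apply: ge_inf.
  have s00 : 0 <= s0 by apply: lb_le_inf; [exists s | move=> z [/andP[]]].
  have s0T : s0 <= T by apply: le_trans s0s _; case/andP: hs.
  have below : forall tau, 0 <= tau < s0 -> `|y tau - x0| < 1.
    move=> tau /andP[t0 ts]; rewrite ltNge; apply/negP => Hc.
    have : A tau by split => //; rewrite t0 /=; apply: ltW; exact: lt_le_trans ts s0T.
    by move/(ge_inf hlb); rewrite leNgt ts.
  have hs0 : `|y s0 - x0| <= 2^-1.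
    apply: MV; first by rewrite s00 s0T.
    by move=> tau /andP[t0 ts]; apply: below; rewrite ltW.
  have [d d0 Hd] := within_eps yc (s0:=s0) (e:=2^-1) (ltac:(by rewrite s00 s0T)) ltac:(by []).
  have [s1 [hs1 As1] s1d] := inf_adherent d0 hinf.
  have s0s1 : s0 <= s1 by apply: ge_inf.
  have : `|y s0 - y s1| < 2^-1.
    apply: Hd => //; rewrite distrC ger0_norm ?subr_ge0 //.
    by rewrite ltrBlDl.
  move=> h2.
  have : `|y s1 - x0| < 1.
    have -> : y s1 - x0 = (y s0 - x0) - (y s0 - y s1) by rewrite opprB [RHS]addrC addrA subrK.
    apply: le_lt_trans (ler_normB _ _) _.
    by rewrite [1](splitr 1) mul1r; apply: ler_ltD.
  by rewrite ltNge As1.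
move=> t ht; apply: MV => // tau /andP[t0 tt]; apply: claim.
by rewrite (ltW t0) /=; apply: le_trans (ltW tt) _; case/andP: ht.
Qed.
Lemma tr_cont a b : continuous (fun v : 'M[R]_(a,b) => v^T).
Proof.
move=> v A /= /nbhs_ballP [e e0 HA]; apply/nbhs_ballP; exists e => // w hw.
apply: HA; move: hw; rewrite -!ball_normE /ball_ /= => h; apply: le_lt_trans h.
apply: mxn_le => // i j; rewrite !mxE.
have -> : v j i - w j i = (v - w) j i by rewrite !mxE.
exact: mxn_entry.
Qed.

Lemma BND n p q (F : 'cV[R]_n -> 'M[R]_(p,q)) rho : continuous F ->
  exists C, 0 <= C /\ forall y, `|y| <= rho -> `|F y| <= C.
Proof.
move=> Fc.
case: (ltP rho 0) => [rn|r0].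
  exists 0; split => // y hy; have := le_lt_trans (normr_ge0 y) (le_lt_trans hy rn).
  by rewrite ltxx.
pose K := [set v : 'rV[R]_n | forall i, `[- rho, rho]%classic (v ord0 i)].
have Kc : compact K.
  exact: (@rV_compact _ n (fun=> `[- rho, rho]%classic) (fun=> @segment_compact _ _ _)).
have K0 : K !=set0 by exists 0 => i /=; rewrite mxE in_itv /= oppr_le0 r0.
have Gc0 : continuous (fun v : 'rV[R]_n => `|F v^T|).
  move=> v; apply: (@continuous_comp _ _ _ (fun v : 'rV[R]_n => F v^T) (fun M : 'M[R]_(p,q) => `|M|)).
  - apply: (@continuous_comp _ _ _ (fun v : 'rV[R]_n => v^T) F); [exact: tr_cont | exact: Fc].
  - exact: norm_continuous.
have Gc : {within K, continuous (fun v : 'rV[R]_n => `|F v^T|)}.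
  exact: continuous_subspaceT.
have [c _ Hc] := compact_EVT_max K0 Kc Gc.
exists `|F c^T|; split => // y hy.
have := Hc y^T; rewrite trmxK; apply.
rewrite inE => i /=; rewrite mxE in_itv /= -ler_norml.
by apply: le_trans hy; exact: mxn_entry.
Qed.
Lemma QE m (A : 'M[R]_m) (x : 'cV[R]_m) :
  qform A x = \sum_i \sum_j x i 0 * A i j * x j 0.
Proof.
rewrite /qform mxE; under eq_bigr do rewrite mxE big_distrl.
rewrite exchange_big; apply: eq_bigr => i _; apply: eq_bigr => j _.
by rewrite !mxE.
Qed.

Lemma qformZ m (A : 'M[R]_m) (x : 'cV[R]_m) k : qform A (k *: x) = k ^+ 2 * qform A x.
Proof.
rewrite !QE mulr_sumr; apply: eq_bigr => i _; rewrite mulr_sumr; apply: eq_bigr => j _.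
by rewrite !mxE; ring.
Qed.

Lemma qform0 m (A : 'M[R]_m) : qform A 0 = 0.
Proof. by rewrite -(scale0r 0) qformZ expr0n mul0r. Qed.

Lemma cont_sum (T : topologicalType) k (f : 'I_k -> T -> R) :
  (forall i, continuous (f i)) -> continuous (fun x => \sum_(i < k) f i x).
Proof.
elim: k f => [|k IH] f Hf.
  under eq_fun do rewrite big_ord0; exact: cst_continuous.
under eq_fun do rewrite big_ord_recr /=.
move=> x; apply: continuousD; last exact: Hf.
exact: (IH (fun i => f (widen_ord (leqnSn k) i))).
Qed.

Lemma qform_cont m (A : 'M[R]_m) : continuous (fun v : 'rV[R]_m => qform A v^T).
Proof.
under eq_fun do rewrite QE.
apply: cont_sum => i; apply: cont_sum => j; move=> v.
apply: (@continuousM R _ (fun v : 'rV[R]_m => v^T i 0 * A i j) (fun v : 'rV[R]_m => v^T j 0)).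
  apply: (@continuousM R _ (fun v : 'rV[R]_m => v^T i 0) (fun v : 'rV[R]_m => A i j)).
- apply: (@continuous_comp _ _ _ (fun v : 'rV[R]_m => v^T) (fun M : 'cV[R]_m => M i 0)).
    exact: tr_cont. exact: coord_continuous.
- exact: cst_continuous.
- apply: (@continuous_comp _ _ _ (fun v : 'rV[R]_m => v^T) (fun M : 'cV[R]_m => M j 0)).
    exact: tr_cont. exact: coord_continuous.
Qed.
Lemma tr_norm a b (M : 'M[R]_(a,b)) : `|M^T| = `|M|.
Proof.
apply/le_anti/andP; split.
  apply: mxn_le => // i j; rewrite mxE; exact: mxn_entry.
apply: mxn_le => // i j; by have := mxn_entry M^T j i; rewrite mxE.
Qed.

Lemma PDR m (A : 'M[R]_m) : pd A -> exists2 r, 0 < r & forall d, r * `|d| ^+ 2 <= qform A d.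
Proof.
move=> [_ Apd].
case: m A Apd => [|m] A Apd.
  by exists 1 => // d; rewrite (flatmx0 d) normr0 qform0 expr0n mulr0.
pose K := [set v : 'rV[R]_m.+1 | `|v| = 1].
have Kc : compact K.
  apply: bounded_closed_compact.
    exists 1; split; first exact: num_real.
    by move=> M M1 v; rewrite /K /= => ->; exact: ltW.
  apply: (@preimage_closed _ _ (fun v : 'rV[R]_m.+1 => `|v|) [set x | x = 1]).
    by move=> v _; exact: norm_continuous.
  exact: closed_eq.
have K0 : K !=set0.
  exists (delta_mx 0 0); rewrite /K /=; apply/le_anti/andP; split.
    by apply: mxn_le => // i j; rewrite mxE; case: (_ && _); rewrite ?normr1 ?normr0.
  by have := mxn_entry (delta_mx 0 0 : 'rV[R]_m.+1) 0 0; rewrite mxE !eqxx normr1.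
have [c cK Hc] := compact_EVT_min K0 Kc (continuous_subspaceT (@qform_cont _ A)).
move: cK; rewrite inE /K /= => cK.
exists (qform A c^T).
  apply: Apd; apply/eqP => /(congr1 (fun M => `|M|)).
  by rewrite tr_norm cK normr0 => /eqP; rewrite oner_eq0.
move=> d; case: (eqVneq d 0) => [->|dn0].
  by rewrite normr0 expr0n mulr0 qform0.
have dp : 0 < `|d| by rewrite normr_gt0.
have := Hc (`|d|^-1 *: d)^T; rewrite trmxK qformZ.
have -> : (`|d|^-1 *: d)^T \in K.
  rewrite inE /K /= tr_norm normrZ normfV normr_id mulVf //.
  by rewrite normr_eq0.
move=> /(_ isT) h.
have q0 : 0 < `|d|^-1 ^+ 2 by rewrite exprn_gt0 // invr_gt0.
rewrite -(ler_pM2l q0) mulrA mulrAC -exprMn mulVf ?gt_eqF // expr1n mul1r.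
exact: h.
Qed.
Lemma MULN p k q (A : 'M[R]_(p,k)) (B : 'M[R]_(k,q)) : `|A *m B| <= k%:R * `|A| * `|B|.
Proof.
apply: mxn_le; first by rewrite !mulr_ge0.
move=> i j; rewrite mxE; apply: le_trans (ler_norm_sum _ _ _) _.
have -> : k%:R * `|A| * `|B| = \sum_(l < k) (`|A| * `|B|).
  by rewrite sumr_const card_ord -[in RHS]mulr_natl; symmetry; apply: mulrA.
apply: ler_sum => l _; rewrite normrM; apply: ler_pM => //; exact: mxn_entry.
Qed.

Lemma DE n (a b : 'cV[R]_n) : dotcv a b = \sum_i a i 0 * b i 0.
Proof. by rewrite /dotcv mxE; apply: eq_bigr => i _; rewrite mxE. Qed.

Lemma dot_bound n (a b : 'cV[R]_n) : `|dotcv a b| <= n%:R * `|a| * `|b|.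
Proof.
rewrite /dotcv; apply: le_trans (mxn_entry _ 0 0) _.
by apply: le_trans (MULN _ _) _; rewrite tr_norm.
Qed.

Lemma dot_lin n (a b c p : 'cV[R]_n) l :
  dotcv (l *: a + (1 - l) *: b - c) p = l * dotcv a p + (1 - l) * dotcv b p - dotcv c p.
Proof.
rewrite !DE !mulr_sumr -big_split -sumrB /=; apply: eq_bigr => i _; rewrite !mxE; ring.
Qed.

Lemma q_lin m (A : 'M[R]_m) (u v : 'cV[R]_m) l :
  l * qform A u + (1 - l) * qform A v - qform A (l *: u + (1 - l) *: v)
  = l * (1 - l) * qform A (u - v).
Proof.
rewrite !QE !pair_big /= !mulr_sumr -big_split -sumrB /=; apply: eq_bigr => i _; rewrite !mxE; ring.
Qed.
Lemma vec_id n m (fa fb fc fe : 'cV[R]_n) (ga gb gc ge : 'M[R]_(n,m)) (u v : 'cV[R]_m) l :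
  l *: (fa + ga *m u) + (1 - l) *: (fb + gb *m v) - (fc + gc *m (l *: u + (1 - l) *: v))
  = (l *: fa + (1 - l) *: fb - fe) + (l *: ga + (1 - l) *: gb - ge) *m u
    + (1 - l) *: ((gb - ge) *m (v - u)) + (fe - fc) + (ge - gc) *m (l *: u + (1 - l) *: v).
Proof.
rewrite ?mulmxDl ?mulmxDr ?mulNmx ?mulmxN -?scalemxAl -?scalemxAr.
move: (ga *m u) (gb *m v) (gc *m u) (gc *m v) (gb *m u) (ge *m u) (ge *m v) => X1 X2 X3 X4 X5 X6 X7.
apply/matrixP => i j; rewrite !mxE; ring.
Qed.
Lemma BS (V : normedModType R) (A : set V) : bounded_set A -> A 0 ->
  exists rho, 0 <= rho /\ forall x, A x -> `|x| <= rho.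
Proof.
move=> [M [_ HM]] A0.
have hM : M < `|M| + 1 by apply: le_lt_trans (ler_norm M) _; rewrite ltrDl.
have H := HM _ hM.
exists (`|M| + 1); split; first by rewrite addr_ge0.
by move=> x Ax; apply: H.
Qed.

Lemma single_le_sum k (F : 'I_k -> R) i0 : (forall i, 0 <= F i) -> F i0 <= \sum_i F i.
Proof.
move=> H; rewrite (bigD1 i0) //= lerDl; apply: sumr_ge0 => i _; exact: H.
Qed.

Lemma BNDV n (V : normedModType R) (F : 'cV[R]_n -> V) rho : continuous F ->
  exists C, 0 <= C /\ forall y, `|y| <= rho -> `|F y| <= C.
Proof.
move=> Fc.
case: (ltP rho 0) => [rn|r0].
  exists 0; split => // y hy; have := le_lt_trans (normr_ge0 y) (le_lt_trans hy rn).
  by rewrite ltxx.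
pose K := [set v : 'rV[R]_n | forall i, `[- rho, rho]%classic (v ord0 i)].
have Kc : compact K.
  exact: (@rV_compact _ n (fun=> `[- rho, rho]%classic) (fun=> @segment_compact _ _ _)).
have K0 : K !=set0 by exists 0 => i /=; rewrite mxE in_itv /= oppr_le0 r0.
have Gc0 : continuous (fun v : 'rV[R]_n => `|F v^T|).
  move=> v; apply: (@continuous_comp _ _ _ (fun v : 'rV[R]_n => F v^T) (fun M : V => `|M|)).
  - apply: (@continuous_comp _ _ _ (fun v : 'rV[R]_n => v^T) F); [exact: tr_cont | exact: Fc].
  - exact: norm_continuous.
have Gc : {within K, continuous (fun v : 'rV[R]_n => `|F v^T|)}.
  exact: continuous_subspaceT.
have [c _ Hc] := compact_EVT_max K0 Kc Gc.
exists `|F c^T|; split => // y hy.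
have := Hc y^T; rewrite trmxK; apply.
rewrite inE => i /=; rewrite mxE in_itv /= -ler_norml.
by apply: le_trans hy; exact: mxn_entry.
Qed.
Lemma cont_norm (T : topologicalType) (V : normedModType R) (F : T -> V) :
  continuous F -> continuous (fun y => `|F y|).
Proof.
move=> Fc y; apply: (@continuous_comp _ _ _ F (fun M : V => `|M|)); first exact: Fc.
exact: norm_continuous.
Qed.
End S.

Unset Implicit Arguments.
Set Strict Implicit.

Ltac pos := repeat (first [ assumption | apply: mulr_ge0 | apply: addr_ge0 | apply: exprn_ge0
   | apply: normr_ge0 | apply: ler0n | apply: invr_ge0 | apply: ler01 ]).

Theorem proposition3 (R : realType) (n m : nat)
    (f0 : 'cV[R]_n -> 'cV[R]_n) (g : 'cV[R]_n -> 'M[R]_(n, m))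
    (X : set 'cV[R]_n) (U : set 'cV[R]_m) (P : set 'cV[R]_n)
    (hbar : R) (phi : R -> 'cV[R]_n -> 'cV[R]_m -> 'cV[R]_n)
    (Q : 'M[R]_n) (Rw : 'M[R]_m) :
  smooth f0 -> smooth g ->
  f0 0 + g 0 *m 0 = 0 ->
  open X -> bounded_set X -> X 0 ->
  open U -> bounded_set U -> U 0 -> convex_set_in U ->
  open P -> bounded_set P -> P 0 ->
  0 < hbar ->
  (forall x0 u0, X x0 -> U u0 ->
     ode_solution (fun x => f0 x + g x *m u0) x0 hbar (fun t => phi t x0 u0) /\
     (forall y, ode_solution (fun x => f0 x + g x *m u0) x0 hbar y ->
        forall t, 0 <= t <= hbar -> y t = phi t x0 u0)) ->
  psd Q -> pd Rw ->
  exists h1 : R, 0 < h1 /\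
    forall h : R, 0 < h -> h <= h1 -> h <= hbar ->
      forall x p, X x -> P p ->
        convex_fun_on U (fun u => hamiltonian phi Q Rw h x u p).
Proof.
move=> sf0 sg _ _ bX X0 _ bU U0 cU _ bP P0 hbar0 Hode _ pdR.
have [rX [rX0 HX]] := BS bX X0.
have [rU [rU0 HU]] := BS bU U0.
have [rP [rP0 HP]] := BS bP P0.
have [r r0 Hr] := PDR pdR.
pose rho1 := rX + 1.
pose dl := fun k : 'I_n => (delta_mx k 0 : 'cV[R]_n).
have [df0 cf0] := sf0 [::].
have [dg cg] := sg [::].
have d1f0 : forall (k : 'I_n) y v, derivable ('D_(dl k) f0) y v.
  by move=> k y v; have [H _] := sf0 [:: dl k]; exact: H.
have c1f0 : forall (k : 'I_n), continuous ('D_(dl k) f0).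
  by move=> k; have [_ H] := sf0 [:: dl k]; exact: H.
have c2f0 : forall (k l : 'I_n), continuous ('D_(dl l) ('D_(dl k) f0)).
  by move=> k l; have [_ H] := sf0 [:: dl l; dl k]; exact: H.
have d1g : forall (k : 'I_n) y v, derivable ('D_(dl k) g) y v.
  by move=> k y v; have [H _] := sg [:: dl k]; exact: H.
have c1g : forall (k : 'I_n), continuous ('D_(dl k) g).
  by move=> k; have [_ H] := sg [:: dl k]; exact: H.
have c2g : forall (k l : 'I_n), continuous ('D_(dl l) ('D_(dl k) g)).
  by move=> k l; have [_ H] := sg [:: dl l; dl k]; exact: H.
have [M0 [M00 HM0]] := BNDV rho1 cf0.
have [G0 [G00 HG0]] := BNDV rho1 cg.
have [C1f [C1f0 HC1f']] := BNDV rho1 (cont_sum (fun k => cont_norm (c1f0 k))).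
have [C2f [C2f0 HC2f']] := BNDV rho1 (cont_sum (fun k => cont_sum (fun l => cont_norm (c2f0 k l)))).
have [C1g [C1g0 HC1g']] := BNDV rho1 (cont_sum (fun k => cont_norm (c1g k))).
have [C2g [C2g0 HC2g']] := BNDV rho1 (cont_sum (fun k => cont_sum (fun l => cont_norm (c2g k l)))).
have HC1f : forall y (k : 'I_n), `|y| <= rho1 -> `|'D_(dl k) f0 y| <= C1f.
  move=> y k hy; apply: le_trans (HC1f' y hy); rewrite ger0_norm ?sumr_ge0 //.
  by apply: single_le_sum => i; exact: normr_ge0.
have HC1g : forall y (k : 'I_n), `|y| <= rho1 -> `|'D_(dl k) g y| <= C1g.
  move=> y k hy; apply: le_trans (HC1g' y hy); rewrite ger0_norm ?sumr_ge0 //.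
  by apply: single_le_sum => i; exact: normr_ge0.
have HC2f : forall y (k l : 'I_n), `|y| <= rho1 -> `|'D_(dl l) ('D_(dl k) f0) y| <= C2f.
  move=> y k l hy; apply: le_trans (HC2f' y hy).
  rewrite ger0_norm; last by apply: sumr_ge0 => i _; apply: sumr_ge0.
  apply: le_trans (_ : _ <= \sum_(l0 < n) `|'D_(dl l0) ('D_(dl k) f0) y|) _.
    by apply: single_le_sum => i; exact: normr_ge0.
  by apply: single_le_sum => i; apply: sumr_ge0 => j _; exact: normr_ge0.
have HC2g : forall y (k l : 'I_n), `|y| <= rho1 -> `|'D_(dl l) ('D_(dl k) g) y| <= C2g.
  move=> y k l hy; apply: le_trans (HC2g' y hy).
  rewrite ger0_norm; last by apply: sumr_ge0 => i _; apply: sumr_ge0.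
  apply: le_trans (_ : _ <= \sum_(l0 < n) `|'D_(dl l0) ('D_(dl k) g) y|) _.
    by apply: single_le_sum => i; exact: normr_ge0.
  by apply: single_le_sum => i; apply: sumr_ge0 => j _; exact: normr_ge0.
have Lipf : forall a b, `|a| <= rho1 -> `|b| <= rho1 -> `|f0 a - f0 b| <= n%:R * C1f * `|a - b|.
  move=> a b ha hb; exact: (LIP (F := f0) C1f0 (fun y k => df0 _ _) HC1f ha hb).
have Lipg : forall a b, `|a| <= rho1 -> `|b| <= rho1 -> `|g a - g b| <= n%:R * C1g * `|a - b|.
  move=> a b ha hb; exact: (LIP (F := g) C1g0 (fun y k => dg _ _) HC1g ha hb).
have Deff : forall a b l, `|a| <= rho1 -> `|b| <= rho1 -> 0 <= l <= 1 ->
   `|l *: f0 a + (1 - l) *: f0 b - f0 (l *: a + (1 - l) *: b)|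
     <= n%:R ^+ 2 * C2f * (l * (1 - l)) * `|a - b| ^+ 2.
  move=> a b l ha hb hl.
  exact: (DEF (F := f0) C2f0 (fun y k => df0 _ _) (fun y k k2 => d1f0 _ _ _) HC2f ha hb hl).
have Defg : forall a b l, `|a| <= rho1 -> `|b| <= rho1 -> 0 <= l <= 1 ->
   `|l *: g a + (1 - l) *: g b - g (l *: a + (1 - l) *: b)|
     <= n%:R ^+ 2 * C2g * (l * (1 - l)) * `|a - b| ^+ 2.
  move=> a b l ha hb hl.
  exact: (DEF (F := g) C2g0 (fun y k => dg _ _) (fun y k k2 => d1g _ _ _) HC2g ha hb hl).
pose M := M0 + m%:R * G0 * rU.
have M0' : 0 <= M by rewrite addr_ge0 // !mulr_ge0.
have HFb : forall z u0, `|z| <= rho1 -> `|u0| <= rU -> `|f0 z + g z *m u0| <= M.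
  move=> z u0 hz hu; apply: le_trans (ler_normD _ _) _; apply: lerD; first exact: HM0.
  apply: le_trans (MULN _ _) _; apply: ler_pM; rewrite ?mulr_ge0 //.
  by apply: ler_wpM2l => //; exact: HG0.
pose Lf := n%:R * C1f.
pose Lg := n%:R * C1g.
pose D2f := n%:R ^+ 2 * C2f.
pose D2g := n%:R ^+ 2 * C2g.
have Lf0 : 0 <= Lf by rewrite mulr_ge0.
have Lg0 : 0 <= Lg by rewrite mulr_ge0.
have D2f0 : 0 <= D2f by rewrite mulr_ge0 ?exprn_ge0.
have D2g0 : 0 <= D2g by rewrite mulr_ge0 ?exprn_ge0.
pose L1 := Lf + m%:R * Lg * rU.
have L10 : 0 <= L1 by rewrite addr_ge0 // !mulr_ge0.
pose K3 := (D2f + m%:R * D2g * rU) * (4 * m%:R ^+ 2 * G0 ^+ 2) + 2 * m%:R ^+ 2 * Lg * G0.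
have K30 : 0 <= K3 by rewrite addr_ge0 // !mulr_ge0 ?addr_ge0 ?mulr_ge0 ?exprn_ge0.
pose K4 := 2 * n%:R * rP * K3 / r.
have K40 : 0 <= K4 by rewrite /K4 !mulr_ge0 ?invr_ge0 ?(ltW r0).
pose Z := 1 + M + L1 + K4.
have Z1 : 1 <= Z.
  have := addr_ge0 (addr_ge0 M0' L10) K40; rewrite /Z; lra.
have Z0 : 0 < Z by apply: lt_le_trans Z1.
exists (2 * Z)^-1; split; first by rewrite invr_gt0 mulr_gt0.
move=> h h0 hh1 hhb x p Xx Pp u v l Uu Uv hl.
have hZ : forall c, c <= Z -> c * h <= 2^-1.
  move=> c cZ; apply: le_trans (_ : Z * h <= 2^-1).
    by apply: ler_wpM2r => //; exact: ltW.
  apply: le_trans (ler_wpM2l (ltW Z0) hh1) _.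
  by rewrite invfM mulrCA mulfV ?gt_eqF // mulr1.
have h1le : h <= 1.
  apply: le_trans hh1 _; rewrite invr_le1 ?mulr_gt0 //.
    by apply: le_trans Z1 _; rewrite ler_peMl // ?ler1n ?(ltW Z0).
  by rewrite unitfE mulf_neq0 // gt_eqF.
have hxX : `|x| <= rX := HX x Xx.
have traj : forall u0, U u0 ->
   [/\ phi 0 x u0 = x, {within `[0, h], continuous (fun t => phi t x u0)},
       (forall t, 0 < t < h -> is_derive t 1 (fun t => phi t x u0)
                                  (f0 (phi t x u0) + g (phi t x u0) *m u0)) &
       (forall t, 0 <= t <= h -> `|phi t x u0| <= rho1)].
  move=> u0 Uu0; have [[y0 [yc yd]] _] := Hode x u0 Xx Uu0.
  have yc' : {within `[0, h], continuous (fun t => phi t x u0)}.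
    apply: continuous_subspaceW yc => z /=; rewrite !in_itv /= => /andP[-> zh].
    exact: le_trans zh hhb.
  have yd' : forall t, 0 < t < h -> is_derive t 1 (fun t => phi t x u0)
                                  (f0 (phi t x u0) + g (phi t x u0) *m u0).
    move=> t /andP[t0 th]; apply: yd; rewrite t0 /=; exact: lt_le_trans th hhb.
  split => // t ht.
  have hu0 : `|u0| <= rU := HU u0 Uu0.
  have := @APR _ n (fun z => f0 z + g z *m u0) (fun t => phi t x u0) x h M rX M0'
    (hZ M ltac:(have := addr_ge0 L10 K40; rewrite /Z; lra)) hxX (fun z hz => HFb z u0 hz hu0) y0 yc' yd' t ht.
  move=> H; have -> : phi t x u0 = (phi t x u0 - x) + x by rewrite subrK.
  apply: le_trans (ler_normD _ _) _; rewrite /rho1 addrC; apply: lerD => //.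
  by apply: le_trans H _; lra.
pose w := l *: u + (1 - l) *: v.
have Uw : U w := cU u v l Uu Uv hl.
have hu : `|u| <= rU := HU u Uu.
have hv : `|v| <= rU := HU v Uv.
have hw : `|w| <= rU := HU w Uw.
have /andP[l0 l1] := hl.
have l1' : 0 <= 1 - l by rewrite subr_ge0.
have [ya0 yac yad yab] := traj u Uu.
have [yb0 ybc ybd ybb] := traj v Uv.
have [yc0 ycc ycd ycb] := traj w Uw.
pose B1 := m%:R * G0 * `|u - v|.
have B10 : 0 <= B1 by rewrite !mulr_ge0.
have L1h : L1 * h <= 2^-1 by apply: hZ; have := addr_ge0 M0' K40; rewrite /Z; lra.
have GR1 : forall t, 0 <= t <= h -> `|phi t x u - phi t x v| <= 2 * B1 * t.
  have := @GR _ n 1 (fun t => phi t x u - phi t x v)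
     (fun t => (f0 (phi t x u) + g (phi t x u) *m u) - (f0 (phi t x v) + g (phi t x v) *m v))
     h L1 B1 L10 L1h B10.
  apply.
  - by rewrite ya0 yb0 subrr.
  - move=> z; exact: (continuousB (yac z) (ybc z)).
  - move=> t ht; exact: (is_deriveB (yad t ht) (ybd t ht)).
  move=> t /andP[t0 th].
  have ht' : 0 <= t <= h by rewrite (ltW t0) (ltW th).
  move: (yab t ht') (ybb t ht').
  move: (phi t x u) (phi t x v) => a b ha hb.
  have -> : f0 a + g a *m u - (f0 b + g b *m v)
     = (f0 a - f0 b) + (g a - g b) *m u + g b *m (u - v).
    rewrite ?mulmxDl ?mulmxDr ?mulNmx ?mulmxN.
    move: (g a *m u) (g b *m u) (g b *m v) => X1 X2 X3.
    by apply/matrixP => i j; rewrite !mxE; ring.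
  apply: le_trans (ler_normD _ _) _; apply: lerD; last first.
    apply: le_trans (MULN _ _) _; rewrite /B1.
    apply: ler_pM; rewrite ?mulr_ge0 //; apply: ler_wpM2l => //; exact: HG0.
  apply: le_trans (ler_normD _ _) _.
  rewrite /L1 mulrDl; apply: lerD; first exact: Lipf.
  apply: le_trans (MULN _ _) _.
  have -> : m%:R * Lg * rU * `|a - b| = m%:R * (Lg * `|a - b|) * rU by ring.
  apply: ler_pM; rewrite ?mulr_ge0 //.
  apply: ler_wpM2l => //; exact: Lipg.
pose E := 2 * B1 * h.
have E0 : 0 <= E by rewrite !mulr_ge0 // ltW.
have hab : forall t, 0 <= t <= h -> `|phi t x u - phi t x v| <= E.
  move=> t ht; apply: le_trans (GR1 t ht) _; apply: ler_wpM2l; first by rewrite mulr_ge0.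
  by case/andP: ht.
pose B2 := l * (1 - l) * ((D2f + m%:R * D2g * rU) * E ^+ 2 + m%:R * Lg * E * `|u - v|).
have B20 : 0 <= B2 by rewrite /B2; pos.
have GR2 : `|l *: phi h x u + (1 - l) *: phi h x v - phi h x w| <= 2 * B2 * h.
  have := @GR _ n 1 (fun t => l *: phi t x u + (1 - l) *: phi t x v - phi t x w)
     (fun t => l *: (f0 (phi t x u) + g (phi t x u) *m u) + (1 - l) *: (f0 (phi t x v) + g (phi t x v) *m v)
               - (f0 (phi t x w) + g (phi t x w) *m w))
     h L1 B2 L10 L1h B20.
  apply; last by rewrite (ltW h0) lexx.
  - by rewrite ya0 yb0 yc0 -scalerDl addrCA subrr addr0 scale1r subrr.
  - move=> z.
    exact: (continuousB (continuousD (@continuousZl_tmp _ _ _ _ l _ (yac z))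
                                     (@continuousZl_tmp _ _ _ _ (1 - l) _ (ybc z))) (ycc z)).
  - move=> t ht.
    exact: (is_deriveB (is_deriveD (is_deriveZ l (yad t ht)) (is_deriveZ (1 - l) (ybd t ht))) (ycd t ht)).
  move=> t /andP[t0 th].
  have ht' : 0 <= t <= h by rewrite (ltW t0) (ltW th).
  move: (yab t ht') (ybb t ht') (ycb t ht') (hab t ht').
  move: (phi t x u) (phi t x v) (phi t x w) => a b c ha hb hc habE.
  set e := l *: a + (1 - l) *: b.
  have he : `|e| <= rho1 by apply: convex_box.
  rewrite /w (vec_id (f0 a) (f0 b) (f0 c) (f0 e) (g a) (g b) (g c) (g e) u v l) -/w -/e.
  have b1 : `|l *: f0 a + (1 - l) *: f0 b - f0 e| <= D2f * (l * (1 - l)) * E ^+ 2.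
    apply: le_trans (Deff a b l ha hb hl) _; rewrite -/D2f.
    apply: ler_wpM2l; first by rewrite mulr_ge0 // mulr_ge0.
    by apply: lerXn2r; rewrite ?nnegrE.
  have b2 : `|(l *: g a + (1 - l) *: g b - g e) *m u| <= m%:R * (D2g * (l * (1 - l)) * E ^+ 2) * rU.
    apply: le_trans (MULN _ _) _; apply: ler_pM => //.
    apply: ler_wpM2l => //; apply: le_trans (Defg a b l ha hb hl) _; rewrite -/D2g.
    apply: ler_wpM2l; first by pos.
    by apply: lerXn2r; rewrite ?nnegrE.
  have hbe : `|b - e| <= l * E.
    have -> : b - e = l *: (b - a) by rewrite /e; apply/matrixP => i j; rewrite !mxE; ring.
    by rewrite normrZ ger0_norm // distrC; apply: ler_wpM2l.
  have b3 : `|(1 - l) *: ((g b - g e) *m (v - u))| <= (1 - l) * (m%:R * (Lg * (l * E)) * `|u - v|).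
    rewrite normrZ ger0_norm //; apply: ler_wpM2l => //.
    apply: le_trans (MULN _ _) _; rewrite [`|v - u|]distrC; apply: ler_wpM2r => //.
    apply: ler_wpM2l => //; apply: le_trans (Lipg b e hb he) _.
    by apply: ler_wpM2l.
  have b4 : `|f0 e - f0 c| <= Lf * `|e - c| by apply: Lipf.
  have b5 : `|(g e - g c) *m w| <= m%:R * (Lg * `|e - c|) * rU.
    apply: le_trans (MULN _ _) _; apply: ler_pM => //.
    by apply: ler_wpM2l => //; apply: Lipg.
  have -> : L1 * `|e - c| + B2 = D2f * (l * (1 - l)) * E ^+ 2 + m%:R * (D2g * (l * (1 - l)) * E ^+ 2) * rU
     + (1 - l) * (m%:R * (Lg * (l * E)) * `|u - v|) + Lf * `|e - c| + m%:R * (Lg * `|e - c|) * rU.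
    by rewrite /L1 /B2; ring.
  apply: le_trans (ler_normD _ _) _; apply: lerD => //.
  apply: le_trans (ler_normD _ _) _; apply: lerD => //.
  apply: le_trans (ler_normD _ _) _; apply: lerD => //.
  apply: le_trans (ler_normD _ _) _; apply: lerD => //.
pose Y2 := l *: phi h x u + (1 - l) *: phi h x v - phi h x w.
pose s := l * (1 - l) * `|u - v| ^+ 2.
have s0 : 0 <= s by rewrite /s; pos.
have KB : B2 <= s * h * K3.
  have -> : B2 = s * h * ((D2f + m%:R * D2g * rU) * (4 * m%:R ^+ 2 * G0 ^+ 2) * h
                          + 2 * m%:R ^+ 2 * Lg * G0).
    by rewrite /B2 /E /B1 /s; ring.
  apply: ler_wpM2l; first by apply: mulr_ge0 => //; exact: ltW.
  rewrite /K3 lerD2r; rewrite -[X in _ <= X]mulr1; apply: ler_wpM2l => //; pos.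
have K4h : 2 * n%:R * rP * K3 * h <= r / 2.
  have H := hZ K4 ltac:(have := addr_ge0 M0' L10; rewrite /Z; lra).
  have -> : 2 * n%:R * rP * K3 * h = r * (K4 * h) by rewrite /K4; field; exact: lt0r_neq0.
  by apply: ler_wpM2l; [exact: ltW | exact: H].
have dB : - (n%:R * (2 * B2 * h) * rP) <= dotcv Y2 p.
  rewrite lerNl; apply: le_trans (ler_norm (- dotcv Y2 p)) _; rewrite normrN.
  apply: le_trans (dot_bound _ _) _.
  apply: ler_pM; [pos | pos | apply: ler_wpM2l => //; exact: GR2 | exact: HP].
have f1 : n%:R * (2 * B2 * h) * rP <= (2 * n%:R * rP * K3 * h) * (s * h).
  have -> : (2 * n%:R * rP * K3 * h) * (s * h) = n%:R * (2 * (s * h * K3) * h) * rP by ring.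
  apply: ler_wpM2r => //; apply: ler_wpM2l => //; apply: ler_wpM2r; first exact: ltW.
  by apply: ler_wpM2l => //; exact: KB.
have f3 : (2 * n%:R * rP * K3 * h) * (s * h) <= (r / 2) * (s * h).
  by apply: ler_wpM2r => //; apply: mulr_ge0 => //; exact: ltW.
have f4 : r * (s * h) <= h * (l * (1 - l) * qform Rw (u - v)).
  have -> : r * (s * h) = h * (l * (1 - l) * (r * `|u - v| ^+ 2)) by rewrite /s; ring.
  apply: ler_wpM2l; first exact: ltW.
  by apply: ler_wpM2l; [pos | exact: Hr].
have E1 := dot_lin (phi h x u) (phi h x v) (phi h x w) p l.
have E2 := q_lin Rw u v l.
rewrite /hamiltonian -/w.
have E3 : h * (l * qform Rw u + (1 - l) * qform Rw v - qform Rw w) = h * (l * (1 - l) * qform Rw (u - v)).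
  by rewrite /w E2.
rewrite -/Y2 in E1.
have rsh : 0 <= r * (s * h) by apply: mulr_ge0; [exact: ltW | apply: mulr_ge0 => //; exact: ltW].
lra.
Qed.
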